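(* Let $D\subset\mathbb{C}^n$ be a hyperconvex domain, $\mathscr{P}$ a priori data on $D$ with poles $\mathbf{Z}=\{\mathbf{z}_1,\dots,\mathbf{z}_p\}$, and $\Phi^D_{\mathscr{P},\max}$ a global Zhou weight related to $\mathscr{P}$ on $D$. Then for every $\psi\in\mathrm{PSH}^-(D)$, the inequality $\psi\le\sigma_{\mathbf{Z}}\big(\psi,\Phi^D_{\mathscr{P},\max}\big)\Phi^D_{\mathscr{P},\max}$ holds on $D$.
   Context: $\mathrm{PSH}^-(D)$: negative plurisubharmonic functions on $D$. Hyperconvex: admits a continuous plurisubharmonic exhaustion $\varrho:D\to(-\infty,0)$. A priori data $\mathscr{P}=\big(\{\mathbf{z}_i\},\{\mathbf{f}_{0,i}\},\{u_{0,i}\}\big)$: distinct $\mathbf{z}_1,\dots,\mathbf{z}_p\in D$, holomorphic vectors $\mathbf{f}_{0,i}$ near $\mathbf{z}_i$ ($|\mathbf f|^2=\sum_j|f_j|^2$), plurisubharmonic $u_{0,i}$ near $\mathbf{z}_i$ with $|\mathbf{f}_{0,i}|^2e^{-2u_{0,i}}$ integrable near $\mathbf{z}_i$. Global Zhou weight related to $\mathscr{P}$ on $D$: $\Phi\in\mathrm{PSH}^-(D)$ such that (1) for large $N_i$, $|\mathbf{f}_{0,i}|^2e^{-2u_{0,i}}|z-\mathbf{z}_i|^{2N_i}e^{-2\Phi}$ is integrable near $\mathbf{z}_i$ for all $i$; (2) $|\mathbf{f}_{0,i}|^2e^{-2u_{0,i}-2\Phi}$ is not integrable near $\mathbf{z}_i$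 for all $i$; (3) any $\Psi\in\mathrm{PSH}^-(D)$ with $\Psi\ge\Phi$ and $|\mathbf{f}_{0,i}|^2e^{-2u_{0,i}-2\Psi}$ non-integrable near every $\mathbf{z}_i$ equals $\Phi$ on $D$. For plurisubharmonic $\psi$, $\sigma_{\mathbf{z}_i}(\psi,\Phi)=\sup\{c\ge0:\psi\le c\Phi+O(1)\text{ near }\mathbf{z}_i\}$ and $\sigma_{\mathbf{Z}}(\psi,\Phi)=\min_{1\le i\le p}\sigma_{\mathbf{z}_i}(\psi,\Phi)$. *)

(* Defs.v *)
(* C^n is modelled as ('rV[R]_n * 'rV[R]_n) = (real parts, imaginary parts),
   with its canonical (product/matrix) topology and normed R-module structure;
   R is an arbitrary realType (a model of the real numbers). *)
From HB Require Import structures.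
From mathcomp Require Import all_boot all_order all_algebra.
From mathcomp Require Import all_classical all_reals all_analysis.
Set Implicit Arguments. Unset Strict Implicit. Unset Printing Implicit Defensive.
Import Order.TTheory GRing.Theory Num.Theory.
Import numFieldNormedType.Exports.
Local Open Scope classical_set_scope.
Local Open Scope ring_scope.

Notation Cn R n := ('rV[R]_n * 'rV[R]_n)%type.

Section Defs.
Variable R : realType.

Definition sqnorm (n : nat) (z : Cn R n) : R :=
  \sum_(j < n) ((z.1 0 j) ^+ 2 + (z.2 0 j) ^+ 2).

(* multiplication by the imaginary unit i on C^n *)
Definition jmul (n : nat) (z : Cn R n) : Cn R n := (- z.2, z.1).

(* the point a + (s + i t) b of the complex line through a in direction b *)
Definition line_pt (n : nat) (a b : Cn R n) (s t : R) : Cn R n :=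
  (a.1 + s *: b.1 - t *: b.2, a.2 + t *: b.1 + s *: b.2).

(* holomorphic on an open set U: real (Frechet) differentiable at each point
   with complex-linear differential *)
Definition holomorphic_on (n m : nat) (U : set (Cn R n)) (f : Cn R n -> Cn R m) :=
  forall z, U z -> differentiable f z /\ forall v, 'd f z (jmul v) = jmul ('d f z v).

Definition holomorphic_near (n m : nat) (z0 : Cn R n) (f : Cn R n -> Cn R m) :=
  exists r : R, 0 < r /\ holomorphic_on (ball z0 r) f.

Definition usc_on (n : nat) (D : set (Cn R n)) (u : Cn R n -> \bar R) :=
  forall z, D z -> forall c : R, (u z < c%:E)%E -> \forall w \near z, (u w < c%:E)%E.

(* plurisubharmonic on the open set D (not identically -oo):
   usc, < +oo, and the sub-mean value inequality on every closed complex
   disc {a + lambda b : |lambda| <= 1} contained in D. *)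
Definition psh_on (n : nat) (D : set (Cn R n)) (u : Cn R n -> \bar R) :=
  [/\ forall z, D z -> (u z < +oo)%E,
      usc_on D u,
      forall a b : Cn R n,
        (forall s t : R, s ^+ 2 + t ^+ 2 <= 1 -> D (line_pt a b s t)) ->
        (u a <= ((2 * pi)^-1)%:E *
           \int[lebesgue_measure]_(t in `[0%R, (2 * pi)%R]) u (line_pt a b (cos t) (sin t)))%E
    & exists z, D z /\ u z != -oo%E].

Definition psh_near (n : nat) (z0 : Cn R n) (u : Cn R n -> \bar R) :=
  exists r : R, 0 < r /\ psh_on (ball z0 r) u.

Definition PSHneg (n : nat) (D : set (Cn R n)) (u : Cn R n -> \bar R) :=
  psh_on D u /\ forall z, D z -> (u z < 0)%E.

Definition domain (n : nat) (D : set (Cn R n)) :=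
  [/\ open D, connected D & D !=set0].

(* hyperconvex domain: admits a continuous psh exhaustion rho : D -> (-oo,0),
   i.e. every sublevel set {rho < c}, c < 0, is relatively compact in D *)
Definition hyperconvex (n : nat) (D : set (Cn R n)) :=
  domain D /\
  exists rho : Cn R n -> R,
    [/\ {within D, continuous rho},
        psh_on D (fun z => (rho z)%:E),
        forall z, D z -> rho z < 0
      & forall c : R, c < 0 ->
          exists K : set (Cn R n),
            [/\ compact K, K `<=` D & [set z | D z /\ rho z < c] `<=` K]].

(* Lebesgue integral of a nonnegative function over a cube of C^n = R^(2n),
   computed as an iterated integral over the 2n real coordinates (Tonelli). *)
Fixpoint iint (k : nat) (r : R) (F : (nat -> R) -> \bar R) (x : nat -> R) : \bar R :=
  match k with
  | 0 => F x
  | k'.+1 => (\int[lebesgue_measure]_(t in `[(- r)%R, r])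
                iint k' r F (fun j => if j == k' then t else x j))%E
  end.

Definition offset (n : nat) (x : nat -> R) : Cn R n :=
  (\row_(j < n) x j, \row_(j < n) x (n + j)%N).

Definition cube_integral (n : nat) (z0 : Cn R n) (r : R) (g : Cn R n -> \bar R) : \bar R :=
  iint (2 * n) r (fun x => g (z0 + offset n x)) (fun _ => 0).

Definition integrable_near (n : nat) (z0 : Cn R n) (g : Cn R n -> \bar R) :=
  exists r : R, 0 < r /\ (cube_integral z0 r g < +oo)%E.

Definition apriori_data (n p : nat) (D : set (Cn R n)) (zs : 'I_p -> Cn R n)
    (m : 'I_p -> nat) (f : forall i, Cn R n -> Cn R (m i))
    (u : 'I_p -> Cn R n -> \bar R) :=
  [/\ (0 < p)%N, injective zs & forall i, D (zs i)] /\
  [/\ forall i, holomorphic_near (zs i) (f i),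
      forall i, psh_near (zs i) (u i)
    & forall i, integrable_near (zs i)
        (fun z => ((sqnorm (f i z))%:E * expeR (- (2%:E * u i z)))%E)].

Definition zw_integrand (n p : nat) (m : 'I_p -> nat) (f : forall i, Cn R n -> Cn R (m i))
    (u : 'I_p -> Cn R n -> \bar R) (Psi : Cn R n -> \bar R) (i : 'I_p) :=
  fun z => ((sqnorm (f i z))%:E * expeR (- (2%:E * (u i z + Psi z))))%E.

Definition global_zhou_weight (n p : nat) (D : set (Cn R n)) (zs : 'I_p -> Cn R n)
    (m : 'I_p -> nat) (f : forall i, Cn R n -> Cn R (m i))
    (u : 'I_p -> Cn R n -> \bar R) (Phi : Cn R n -> \bar R) :=
  [/\ PSHneg D Phi,
      forall i, exists N0 : nat, forall N : nat, (N0 <= N)%N ->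
        integrable_near (zs i)
          (fun z => ((sqnorm (z - zs i) ^+ N)%:E * zw_integrand f u Phi i z)%E),
      forall i, ~ integrable_near (zs i) (zw_integrand f u Phi i)
    & forall Psi, PSHneg D Psi -> (forall z, D z -> (Phi z <= Psi z)%E) ->
        (forall i, ~ integrable_near (zs i) (zw_integrand f u Psi i)) ->
        forall z, D z -> Psi z = Phi z].

Definition sigma_pt (n : nat) (z0 : Cn R n) (psi Phi : Cn R n -> \bar R) : \bar R :=
  ereal_sup [set c%:E | c in [set c : R | 0 <= c /\
     exists C : R, \forall w \near z0, (psi w <= c%:E * Phi w + C%:E)%E]].

Definition sigma_Z (n p : nat) (zs : 'I_p -> Cn R n) (psi Phi : Cn R n -> \bar R) : \bar R :=
  \big[Order.min/+oo%E]_(i < p) sigma_pt (zs i) psi Phi.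

End Defs.

(* Main.v *)
Require Import Defs.
From HB Require Import structures.
From mathcomp Require Import all_boot all_order all_algebra.
From mathcomp Require Import all_classical all_reals all_analysis.
Import Order.TTheory GRing.Theory Num.Theory.
Local Open Scope classical_set_scope.
Local Open Scope ring_scope.

Import numFieldNormedType.Exports.
Import HBNNSimple.
Set Implicit Arguments. Unset Strict Implicit.
Section nn.
Local Open Scope ereal_scope.
Context d (T : measurableType d) (R : realType) (mu : {measure set T -> \bar R}).

Definition nnI (f : T -> \bar R) := ereal_sup [set sintegral mu h |
  h in [set h : {nnsfun T >-> R} | forall x, (h x)%:E <= f x]].

Lemma nnI_le f g : (forall x, f x <= g x) -> nnI f <= nnI g.
Proof.
move=> fg; apply: ge_ereal_sup => _ [h hf <-]; apply: ereal_sup_ubound.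
by exists h => // x; apply: le_trans (hf x) (fg x).
Qed.

Lemma nnI_scale_le (a : R) f : (0 < a)%R -> nnI (fun x => a%:E * f x) <= a%:E * nnI f.
Proof.
move=> a0; apply: ge_ereal_sup => _ [h hf <-].
have ia0 : (0 <= a^-1)%R by rewrite invr_ge0 ltW.
pose h' := scale_nnsfun h ia0.
have -> : sintegral mu h = sintegral mu (cst a \* h')%R.
  apply: eq_sintegral => x /=; by rewrite mulrA mulfV ?gt_eqF// mul1r.
rewrite sintegralrM lee_pmul2l ?lte_fin//.
apply: ereal_sup_ubound; exists h' => // x /=.
rewrite EFinM -(lee_pmul2l (_ : a%:E \is a fin_num) (_ : 0 < a%:E)) ?lte_fin// muleA -EFinM mulfV ?gt_eqF// mul1r.
exact: hf.
Qed.

Lemma nnI_scale (a : R) f : (0 < a)%R -> nnI (fun x => a%:E * f x) = a%:E * nnI f.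
Proof.
move=> a0; apply/eqP; rewrite eq_le nnI_scale_le //=.
have ia0 : (0 < a^-1)%R by rewrite invr_gt0.
have := @nnI_scale_le a^-1 (fun x => a%:E * f x) ia0.
have -> : (fun x => a^-1%:E * (a%:E * f x)) = f.
  by apply: funext => x; rewrite muleA -EFinM mulVf ?gt_eqF// mul1e.
move=> H; rewrite -(lee_pmul2l (_ : a^-1%:E \is a fin_num) (_ : 0 < a^-1%:E)) ?lte_fin//.
by rewrite muleA -EFinM mulVf ?gt_eqF// mul1e.
Qed.

Lemma int_nnI D f : (forall x, D x -> 0 <= f x) -> \int[mu]_(x in D) f x = nnI (f \_ D).
Proof. move=> f0; exact: ge0_integralE. Qed.

Lemma int_le_ge0 D f g : (forall x, D x -> 0 <= f x) -> (forall x, D x -> f x <= g x) ->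
  \int[mu]_(x in D) f x <= \int[mu]_(x in D) g x.
Proof.
move=> f0 fg; have g0 : forall x, D x -> 0 <= g x by move=> x Dx; exact: le_trans (f0 _ Dx) (fg _ Dx).
rewrite !int_nnI //; apply: nnI_le => x; rewrite /patch; case: ifP => // /set_mem; exact: fg.
Qed.

Lemma int_scale_ge0 D f (a : R) : (0 < a)%R -> (forall x, D x -> 0 <= f x) ->
  \int[mu]_(x in D) (a%:E * f x) = a%:E * \int[mu]_(x in D) f x.
Proof.
move=> a0 f0; rewrite !int_nnI //; last first.
  by move=> x Dx; apply: mule_ge0; [rewrite lee_fin ltW | exact: f0].
rewrite -nnI_scale //; congr nnI; apply: funext => x; rewrite /patch; case: ifP => //.
by rewrite mule0.
Qed.

Lemma int_le0E D f : (forall x, D x -> f x <= 0) ->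
  \int[mu]_(x in D) f x = - \int[mu]_(x in D) (- f x).
Proof.
move=> f0; rewrite -integral_ge0N; last by move=> x Dx; rewrite oppe_ge0 f0.
by apply: eq_integral => x _; rewrite oppeK.
Qed.

Lemma int_le_le0 D f g : (forall x, D x -> g x <= 0) -> (forall x, D x -> f x <= g x) ->
  \int[mu]_(x in D) f x <= \int[mu]_(x in D) g x.
Proof.
move=> g0 fg; have f0 : forall x, D x -> f x <= 0 by move=> x Dx; exact: le_trans (fg _ Dx) (g0 _ Dx).
rewrite (@int_le0E D f f0) (@int_le0E D g g0) leeN2; apply: int_le_ge0.
  by move=> x Dx; rewrite oppe_ge0 g0.
by move=> x Dx; rewrite leeN2 fg.
Qed.

Lemma int_scale_le0 D f (a : R) : (0 < a)%R -> (forall x, D x -> f x <= 0) ->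
  \int[mu]_(x in D) (a%:E * f x) = a%:E * \int[mu]_(x in D) f x.
Proof.
move=> a0 f0; rewrite (@int_le0E D f f0) int_le0E; last first.
  by move=> x Dx; apply: mule_ge0_le0; [rewrite lee_fin ltW | exact: f0].
rewrite muleN; congr (- _).
rewrite -int_scale_ge0 //; last by move=> x Dx; rewrite oppe_ge0 f0.
by apply: eq_integral => x _; rewrite muleN.
Qed.

Lemma int_le_set D E f : D `<=` E -> (forall x, E x -> 0 <= f x) ->
  \int[mu]_(x in D) f x <= \int[mu]_(x in E) f x.
Proof.
move=> DE f0; rewrite !int_nnI //; last by move=> x /DE; exact: f0.
apply: nnI_le => x; rewrite /patch; case: ifP => [/set_mem/DE Ex|_].
  by have /mem_set -> := Ex.
by case: ifP => // /set_mem; exact: f0.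
Qed.
End nn.

Section iintl.
Local Open Scope ereal_scope.
Variable R : realType.
Implicit Types (F G : (nat -> R) -> \bar R).

Definition upd (x : nat -> R) k (t : R) := fun j => if j == k then t else x j.

Lemma iint_ge0 k r F x : (forall y, 0 <= F y) -> 0 <= iint k r F x.
Proof.
move=> F0; elim: k x => [|k IH] x /=; first exact: F0.
by apply: integral_ge0 => t _; apply: IH.
Qed.

Lemma iint_mono k r F G x : (forall y, 0 <= F y) ->
  (forall y, (forall j, (j < k)%N -> (- r <= y j <= r)%R) ->
             (forall j, (k <= j)%N -> y j = x j) -> F y <= G y) ->
  iint k r F x <= iint k r G x.
Proof.
move=> F0; elim: k x => [|k IH] x /= H.
  by apply: H => // j; rewrite ltn0.
apply: int_le_ge0 => [t _|t]; first exact: iint_ge0.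
rewrite /= in_itv /= => /andP[t1 t2].
apply: IH => y hy1 hy2; apply: H => j hj.
  rewrite ltnS leq_eqVlt in hj; case/orP: hj => [/eqP ->|hj]; last exact: hy1.
  by rewrite hy2 // eqxx t1 t2.
by rewrite hy2 ?(ltnW hj) //= ifN // gtn_eqF.
Qed.

Lemma iint_scale k r F x (a : R) : (0 < a)%R -> (forall y, 0 <= F y) ->
  iint k r (fun y => a%:E * F y) x = a%:E * iint k r F x.
Proof.
move=> a0 F0; elim: k x => [|k IH] x //=.
rewrite -int_scale_ge0 //; last by move=> t _; exact: iint_ge0.
by apply: eq_integral => t _; rewrite IH.
Qed.

Lemma iint_r_mono k r r' F x : (0 <= r' <= r)%R -> (forall y, 0 <= F y) ->
  iint k r' F x <= iint k r F x.
Proof.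
move=> /andP[r0 rr] F0; elim: k x => [|k IH] x //=.
apply: (@le_trans _ _ (\int[lebesgue_measure]_(t in `[(- r')%R, r']) iint k r F (fun j => if j == k then t else x j))).
  apply: int_le_ge0 => [t _|t _]; [exact: iint_ge0 | exact: IH].
apply: int_le_set => [t|t _]; last exact: iint_ge0.
rewrite /= !in_itv /= => /andP[t1 t2].
by rewrite (le_trans _ t1) ?(le_trans t2) // lerN2.
Qed.
End iintl.

Section pshl.
Local Open Scope ereal_scope.
Variables (R : realType) (n : nat).

Lemma scale_lt (c r : R) (x : \bar R) : (0 < c)%R ->
  (c^-1%:E * x < r%:E) = (x < (c * r)%:E).
Proof.
move=> c0; case: x => [x| |] /=.
- by rewrite -EFinM !lte_fin ltr_pdivrMl.
- by rewrite mulry gtr0_sg ?invr_gt0 // mul1e !ltNge !leey.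
- by rewrite mulrNy gtr0_sg ?invr_gt0 // mul1e !ltNye.
Qed.

Lemma line_pt0 (a b : Cn R n) : line_pt a b 0 0 = a.
Proof. by case: a => a1 a2; rewrite /line_pt /= !scale0r !addr0 subr0. Qed.

Definition PsiF (c : R) (psi Phi : Cn R n -> \bar R) :=
  fun w => maxe (c^-1%:E * psi w) (Phi w).

Lemma PsiF_PSHneg (c : R) (D : set (Cn R n)) psi Phi : (0 < c)%R ->
  PSHneg D psi -> PSHneg D Phi -> PSHneg D (PsiF c psi Phi).
Proof.
move=> c0 [[_ uscp subp _] negp] [[_ uscP subP [z0 [Dz0 Pz0]]] negP].
have negS : forall z, D z -> PsiF c psi Phi z < 0.
  move=> z Dz; rewrite /PsiF gt_max negP // andbT.
  by rewrite (_ : 0 = 0%R%:E) // scale_lt // mulr0 negp.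
split; last exact: negS.
split.
- by move=> z Dz; apply: lt_trans (negS _ Dz) _; rewrite ltey.
- move=> z Dz r; rewrite /PsiF gt_max => /andP[h1 h2].
  rewrite scale_lt // in h1.
  near=> w; rewrite gt_max scale_lt //; apply/andP; split; near: w.
    exact: uscp z Dz _ h1.
  exact: uscP z Dz _ h2.
- move=> a b Hd.
  have Da : D a by have := Hd 0%R 0%R; rewrite line_pt0; apply; rewrite expr0n /= addr0.
  have Dc : forall t, D (line_pt a b (cos t) (sin t)).
    by move=> t; apply: Hd; rewrite cos2Dsin2.
  set I := fun g : Cn R n -> \bar R =>
    \int[lebesgue_measure]_(t in `[0%R, (2 * pi)%R]) g (line_pt a b (cos t) (sin t)).
  have pi0 : (0%R)%:E <= (((2 * pi)^-1 : R))%:E by rewrite lee_fin invr_ge0 mulr_ge0 // pi_ge0.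
  have IPsi : forall g, (forall z, D z -> g z <= PsiF c psi Phi z) -> I g <= I (PsiF c psi Phi).
    move=> g hg; apply: int_le_le0 => t _; [exact/ltW/negS | exact: hg].
  rewrite /PsiF ge_max; apply/andP; split.
  + apply: (@le_trans _ _ (c^-1%:E * ((((2 * pi)^-1 : R))%:E * I psi))).
      apply: lee_wpmul2l; [by rewrite lee_fin invr_ge0 ltW | exact: subp].
    rewrite muleCA; apply: lee_wpmul2l => //.
    rewrite /I -int_scale_le0 ?invr_gt0 //; last by move=> t _; exact/ltW/negp.
    by apply: (IPsi (fun w => c^-1%:E * psi w)) => z Dz; rewrite /PsiF le_max lexx.
  + apply: le_trans (subP _ _ Hd) _; apply: lee_wpmul2l => //.
    by apply: IPsi => z Dz; rewrite /PsiF le_max lexx orbT.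
- by exists z0; split => //; apply: contra Pz0 => /eqP h; rewrite -leeNy_eq -h /PsiF le_max lexx orbT.
Unshelve. all: by end_near.
Qed.
End pshl.
Section E.
Local Open Scope ereal_scope.
Variable R : realType.

Lemma psi_bound (c c' C : R) (p phi : \bar R) : (0 < c)%R -> (c <= c')%R ->
  phi <= 0 -> p <= c'%:E * phi + C%:E -> c^-1%:E * p <= phi + (c^-1 * C)%:E.
Proof.
move=> c0 cc' + hp; have c'0 : (0 < c')%R by exact: lt_le_trans cc'.
case: phi hp => [φ| |] hp //=; rewrite ?leNye //.
- move=> φ0; case: p hp => [x| |] hp //; rewrite ?leNye //.
    rewrite -EFinM -EFinD lee_fin; rewrite -EFinM -EFinD lee_fin in hp.
    have h2 : (x <= c * φ + C)%R.
      by apply: le_trans hp _; rewrite lerD2r ler_wnM2r.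
    rewrite -[φ](mulKf (lt0r_neq0 c0)) -mulrDr ler_pM2l ?invr_gt0 //.
  by rewrite muleC gt0_mulNye ?lte_fin ?invr_gt0 // leNye.
- move=> _; rewrite muleC gt0_mulNye ?lte_fin // in hp.
  have -> : p = -oo by apply/eqP; rewrite -leeNy_eq.
  by rewrite muleC gt0_mulNye ?lte_fin ?invr_gt0 // leNye.
Qed.

Lemma exp_bound (K : R) (x y : \bar R) : y <= x + K%:E ->
  expeR (- (2%:E * x)) * (expR (- (2 * K)))%:E <= expeR (- (2%:E * y)).
Proof.
case: x => [x| |]; case: y => [y| |] //= h.
- rewrite -EFinM lee_fin -expRD ler_expR; rewrite -EFinD lee_fin in h.
  by rewrite -opprD lerN2 -mulrDr ler_pM2l.
- by rewrite (muleC 2%:E) gt0_mulNye //= leey.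
  by rewrite (muleC 2%:E) gt0_mulye //= -EFinM mul0r lee_fin expR_ge0.
- by rewrite (muleC 2%:E) gt0_mulye //= -EFinM mul0r ?lee_fin ?expR_ge0 ?expeR_ge0.
- by rewrite (muleC 2%:E) gt0_mulye //= -EFinM mul0r ?lee_fin ?expR_ge0 ?expeR_ge0.
- by rewrite (muleC 2%:E) gt0_mulNye //= leey.
Qed.
End E.
Lemma offset_ball (R : realType) (n : nat) (z0 : Cn R n) (e r : R) (y : nat -> R) :
  0 <= r < e -> (forall j, (j < 2 * n)%N -> - r <= y j <= r) ->
  ball z0 e (z0 + offset n y).
Proof.
move=> /andP[r0 re] hy; have e0 : 0 < e by exact: le_lt_trans r0 re.
split; split => // i j; rewrite ?ord1 /= !mxE /ball /= opprD addrA subrr add0r normrN;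
  rewrite (le_lt_trans _ re) //; rewrite ler_norml.
- apply: hy; rewrite mul2n -addnn; apply: ltn_addr; exact: ltn_ord.
- apply: hy; rewrite mul2n -addnn ltn_add2l; exact: ltn_ord.
Qed.

Section keysec.
Local Open Scope ereal_scope.

Lemma zw_ge0 (R : realType) (n p : nat) (m : 'I_p -> nat) (f : forall i, Cn R n -> Cn R (m i))
    (u : 'I_p -> Cn R n -> \bar R) (Psi : Cn R n -> \bar R) i z :
  0 <= zw_integrand f u Psi i z.
Proof.
apply: mule_ge0; last exact: expeR_ge0.
by rewrite lee_fin /sqnorm sumr_ge0 // => j _; rewrite addr_ge0 // sqr_ge0.
Qed.

Lemma key (R : realType) (n : nat) (D : set (Cn R n)) (p : nat)
    (zs : 'I_p -> Cn R n) (m : 'I_p -> nat) (f : forall i, Cn R n -> Cn R (m i))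
    (u : 'I_p -> Cn R n -> \bar R) (Phi : Cn R n -> \bar R) (psi : Cn R n -> \bar R) (c : R) :
  open D -> (forall i, D (zs i)) -> global_zhou_weight D zs f u Phi -> PSHneg D psi ->
  (0 < c)%R -> (forall i, c%:E < sigma_pt (zs i) psi Phi) ->
  forall z, D z -> psi z <= c%:E * Phi z.
Proof.
move=> Dop Dzs [PhiN Hint Hnon Hmax] psiN c0 Hc.
pose Psi := PsiF c psi Phi.
have PsiN : PSHneg D Psi := PsiF_PSHneg c0 psiN PhiN.
have le1 : forall z, D z -> Phi z <= Psi z by move=> z _; rewrite /Psi /PsiF le_max lexx orbT.
have nonint : forall i, ~ integrable_near (zs i) (zw_integrand f u Psi i).
  move=> i [r [r0 hr]].
  have [_ [c' [c'0 [C HC]] <-] cc'] := ereal_sup_gt (Hc i).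
  rewrite lte_fin in cc'.
  have nD : \forall w \near zs i, D w.
    by move: Dop; rewrite openE => /(_ _ (Dzs i)).
  pose K := Num.max (c^-1 * C)%R 0%R.
  have K0 : (0 <= K)%R by rewrite /K le_max lexx orbT.
  have hb : \forall w \near zs i, Psi w <= Phi w + K%:E.
    near=> w.
    have Dw : D w by near: w.
    have hw : psi w <= c'%:E * Phi w + C%:E by near: w.
    rewrite /Psi /PsiF ge_max; apply/andP; split.
      apply: le_trans (psi_bound c0 (ltW cc') (ltW (PhiN.2 w Dw)) hw) _.
      by rewrite leeD2l // lee_fin /K le_max lexx.
    by rewrite leeDl // lee_fin.
  move/nbhs_ballP: hb => [rho rho0 hball].
  apply: (Hnon i); exists (Num.min r (rho / 2)%R).
  have r'0 : (0 < Num.min r (rho / 2))%R by rewrite lt_min r0 divr_gt0.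
  have hmr : (Num.min r (rho / 2) < rho)%R.
    by rewrite gt_min; apply/orP; right; rewrite ltr_pdivrMr // ltr_pMr // ltr1n.
  split => //.
  rewrite /cube_integral.
  set F := fun x => zw_integrand f u Phi i (zs i + offset n x)%R.
  set G := fun x => zw_integrand f u Psi i (zs i + offset n x)%R.
  apply: (@le_lt_trans _ _ ((expR (2 * K)%R)%:E * iint (2 * n) (Num.min r (rho / 2)%R) G (fun=> 0%R))).
    rewrite -iint_scale ?expR_gt0 //; last by move=> y; exact: zw_ge0.
    apply: iint_mono => [y|y hy _]; first exact: zw_ge0.
    have hw := hball _ (offset_ball (zs i) (n := n) (y := y) _ hy).
    rewrite /F /G /zw_integrand.
    have {}hw := hw (_ : (0 <= Num.min r (rho / 2) < rho)%R).
    rewrite ltW //= in hw; have {}hw := hw hmr.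
    set w := (zs i + offset n y)%R in hw *.
    set a := u i w.
    have h1 : a + Psi w <= (a + Phi w) + K%:E by rewrite -addeA leeD2l.
    have hexp := exp_bound h1.
    set sq := (sqnorm (f i w))%:E; set E1 := expeR _; set E2 := expeR (- _).
    have sq0 : 0 <= sq by rewrite /sq lee_fin /sqnorm sumr_ge0 // => j _; rewrite addr_ge0 // sqr_ge0.
    apply: (@le_trans _ _ ((expR (2 * K)%R)%:E * (sq * (E1 * (expR (- (2 * K))%R)%:E)))).
      rewrite (muleC (expR _)%:E) -!muleA -EFinM -expRD addNr expR0 mule1 //.
    by rewrite lee_wpmul2l ?lee_fin ?expR_ge0 // lee_wpmul2l.
  apply: lte_mul_pinfty => //.
  apply: le_lt_trans hr.
  apply: iint_r_mono; last by move=> y; exact: zw_ge0.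
  by rewrite ltW //= ge_min lexx.
have eqPsi := Hmax Psi PsiN le1 nonint.
move=> z Dz; have := eqPsi z Dz; rewrite /Psi /PsiF => h.
have : c^-1%:E * psi z <= Phi z by rewrite -h le_max lexx.
rewrite -(lee_pmul2l (_ : c%:E \is a fin_num) (_ : 0 < c%:E)) ?lte_fin //.
by rewrite muleA -EFinM mulfV ?lt0r_neq0 // mul1e.
Unshelve. all: by end_near.
Qed.
End keysec.

Unset Implicit Arguments.

Theorem proposition1p9 (R : realType) (n : nat) (D : set (Cn R n)) (p : nat)
    (zs : 'I_p -> Cn R n) (m : 'I_p -> nat) (f : forall i, Cn R n -> Cn R (m i))
    (u : 'I_p -> Cn R n -> \bar R) (Phi : Cn R n -> \bar R) :
  (0 < n)%N ->
  hyperconvex D ->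
  apriori_data D zs f u ->
  global_zhou_weight D zs f u Phi ->
  forall psi : Cn R n -> \bar R, PSHneg D psi ->
  forall z, D z -> (psi z <= sigma_Z zs psi Phi * Phi z)%E.
Proof.
move=> _ [[Dop _ _] _] [[_ _ Dzs] _] GZ psi psiN z Dz.
have K := key Dop Dzs GZ psiN.
have PhiN : forall w, D w -> (Phi w < 0)%E by case: GZ => [[_ h] _ _ _].
have psz : (psi z < 0)%E := psiN.2 z Dz.
have Phz := PhiN z Dz.
have Hlt : forall c : R, (0 < c)%R -> (c%:E < sigma_Z zs psi Phi)%E ->
    (psi z <= c%:E * Phi z)%E.
  move=> c c0 hc; apply: K => // i; apply: lt_le_trans hc _.
  exact: bigmin_le_cond.
case Es: (sigma_Z zs psi Phi) Hlt => [s| |] Hlt.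
- case: (lerP s 0) => s0.
    by apply: le_trans (ltW psz) _; apply: mule_le0; rewrite ?lee_fin // ltW.
  move: Phz; case Ep: (Phi z) => [φ| |] Phz //.
  + move: psz; case Eq: (psi z) => [x| |] psz //; last by rewrite leNye.
    rewrite -EFinM lee_fin; rewrite lte_fin in Phz psz.
    have xφ : (0 < x / φ)%R by rewrite -divrNN divr_gt0 // oppr_gt0.
    suff : (s <= x / φ)%R by rewrite ler_ndivlMr // mulrC.
    apply/unstable.ler_ltP => c cs.
    case: (lerP c 0) => c0; first exact: le_trans c0 (ltW xφ).
    have := Hlt c c0; rewrite lte_fin => /(_ cs); rewrite Ep Eq -EFinM lee_fin.
    by rewrite ler_ndivlMr // mulrC.
  + have := Hlt (s / 2)%R; rewrite divr_gt0 // lte_fin ltr_pdivrMr // ltr_pMr // ltr1n.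
    rewrite Ep muleC gt0_mulNye ?lte_fin ?divr_gt0 // => /(_ isT isT).
    by rewrite leeNy_eq => /eqP ->; rewrite leNye.
- move: Phz; case Ep: (Phi z) => [φ| |] Phz //.
  + move: psz; case Eq: (psi z) => [x| |] psz //; last by rewrite leNye.
    rewrite lte_fin in Phz psz; exfalso.
    have xφ : (0 < x / φ)%R by rewrite -divrNN divr_gt0 // oppr_gt0.
    have := Hlt (x / φ + 1)%R; rewrite addr_gt0 // ltry Ep Eq -EFinM lee_fin => /(_ isT isT).
    rewrite mulrDl divfK ?ltr0_neq0 // mul1r => h.
    by rewrite lerDl leNgt Phz in h.
  + have := Hlt 1%R; rewrite ltr01 ltry Ep mul1e => /(_ isT isT) h.
    by have -> : psi z = -oo%E by apply/eqP; rewrite -leeNy_eq.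
- by apply: le_trans (ltW psz) _; apply: mule_le0; rewrite ?leNye // ltW.
Qed.
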